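(* If $n$ is a prime number, or $n=4$, then there exists no u-p-cycle for $n$-permutations.
   Context: An $n$-permutation is a permutation of $\{1,\ldots,n\}$. For a word $w$ of distinct numbers, $\mathrm{red}(w)$ is obtained by replacing the $i$-th smallest letter by $i$. Let $\Diamond$ be a symbol not among the integers. A word $f=f_1\cdots f_n$ over the positive integers together with $\Diamond$, whose integer letters are pairwise distinct, covers an $n$-permutation $\pi$ if one can substitute real numbers for the occurrences of $\Diamond$ (independently) so that the resulting word has $n$ pairwise distinct entries and reduces to $\pi$; equivalently, $f_i<f_j\iff\pi_i<\pi_j$ for all positions $i,j$ holding integers. A u-p-cycle (universal partial cycle) for $n$-permutations is a cyclic word $u_1\cdots u_N$ with $N\geq n$ over this alphabet containing at least one $\Diamond$, indices read modulo $N$, such that each of its $N$ cyclic factors $u_iu_{i+1}\cdots u_{i+n-1}$ ($1\leq i\leq N$) has pairwise distinct integer letters and every $n$-permutation is covered by exactly one of these factors. *)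

(* Defs.v *)
From mathcomp Require Import all_boot all_order all_fingroup.
Set Implicit Arguments. Unset Strict Implicit. Unset Printing Implicit Defensive.

(* A letter is either an integer letter [Some k] or the hole symbol [None] (= Diamond). *)
Definition letter := option nat.
Notation Diamond := (@None nat).

Definition int_letters (f : seq letter) : seq nat := pmap id f.

(* The cyclic factor u_i u_{i+1} ... u_{i+n-1} (indices modulo N = size u), 0-based. *)
Definition cfactor (u : seq letter) (n i : nat) : seq letter :=
  [seq nth Diamond u ((i + j) %% size u) | j <- iota 0 n].

(* f covers the n-permutation p (p : 'S_n, position k |-> value p k, values 0..n-1,
   order-isomorphic to 1..n): f_i < f_j <-> p_i < p_j for all integer positions i,j. *)
Definition covers (n : nat) (f : seq letter) (p : 'S_n) : Prop :=
  size f = n /\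
  forall (i j : 'I_n) (a b : nat),
    nth Diamond f i = Some a -> nth Diamond f j = Some b ->
    (a < b) = (p i < p j).

(* u (a cyclic word, given by one linearization) is a u-p-cycle for n-permutations. *)
Definition upcycle (n : nat) (u : seq letter) : Prop :=
  [/\ n <= size u,
      Diamond \in u,
      (forall k, Some k \in u -> 0 < k),
      (forall i, i < size u -> uniq (int_letters (cfactor u n i)))
    & forall p : 'S_n, exists! i, i < size u /\ covers (cfactor u n i) p].

(* Main.v *)
Require Import Defs.
From mathcomp Require Import all_boot all_order all_fingroup zify.
Set Implicit Arguments. Unset Strict Implicit. Unset Printing Implicit Defensive.

Lemma stdz n (a : nat -> nat) :
  (forall i j, i < n -> j < n -> a i = a j -> i = j) ->
  exists p : 'S_n, forall i j : 'I_n, (p i < p j) = (a i < a j).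
Proof.
move=> ainj.
pose S (i : 'I_n) := [set j : 'I_n | a j < a i].
have Slt i : #|S i| < n.
  have : S i \proper [set: 'I_n].
    apply/properP; split; first exact: subsetT.
    by exists i; rewrite ?inE ?ltnn.
  by move/proper_card; rewrite cardsT card_ord.
have mono (i j : 'I_n) : a i < a j -> #|S i| < #|S j|.
  move=> lt; apply: proper_card; apply/properP; split.
    apply/subsetP => k; rewrite !inE => h; exact: ltn_trans h lt.
  by exists i; rewrite !inE ?ltnn.
pose r i := Ordinal (Slt i).
have rinj : injective r.
  move=> i j /(congr1 val) /= e.
  case: (ltngtP (a i) (a j)) => h.
  - by move: (mono _ _ h); rewrite e ltnn.
  - by move: (mono _ _ h); rewrite e ltnn.
  - by apply: val_inj; exact: ainj (ltn_ord i) (ltn_ord j) h.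
exists (perm rinj) => i j; rewrite !permE /=.
case: (ltngtP (a i) (a j)) => h.
- exact: mono.
- by apply/negbTE; rewrite -leqNgt ltnW // mono.
- by rewrite (val_inj (ainj _ _ (ltn_ord i) (ltn_ord j) h)) !ltnn.
Qed.


Lemma uniq_pmap_nth (w : seq letter) i j a :
  uniq (int_letters w) -> i < size w -> j < size w ->
  nth Diamond w i = Some a -> nth Diamond w j = Some a -> i = j.
Proof.
rewrite /int_letters.
elim: w i j => [|c w IH] i j //= Hu Hi Hj Ei Ej.
have Hu' : uniq (pmap id w) by move: Hu; clear; case: c => [c /andP []|].
case: i Hi Ei => [|i] Hi Ei; case: j Hj Ej => [|j] Hj Ej //.
- exfalso; move: Ei Hu => /= ->; rewrite /= => /andP [Hn _].
  by move: Hn; rewrite mem_pmap map_id -[Some a]Ej /= mem_nth.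
- exfalso; move: Ej Hu => /= ->; rewrite /= => /andP [Hn _].
  by move: Hn; rewrite mem_pmap map_id -[Some a]Ei /= mem_nth.
- by congr S; apply: IH Ei Ej.
Qed.

Lemma realize n (w : seq letter) (a : nat -> nat) :
  size w = n ->
  (forall i j, i < n -> j < n -> a i = a j -> i = j) ->
  (forall i j x y, i < n -> j < n -> nth Diamond w i = Some x ->
      nth Diamond w j = Some y -> (x < y) = (a i < a j)) ->
  exists p : 'S_n, covers w p /\ forall i j : 'I_n, (p i < p j) = (a i < a j).
Proof.
move=> sw ainj cons; have [p Hp] := stdz ainj.
exists p; split => //; split => // i j x y Hi Hj.
by rewrite Hp; apply: cons.
Qed.


Definition xx (u : seq letter) p := nth Diamond u (p %% size u).

Definition pv n (p : 'S_n) k : nat :=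
  odflt 0 (omap (fun o : 'I_n => val (p o)) (insub k)).

Lemma pvE n (p : 'S_n) k (H : k < n) : pv p k = p (Ordinal H).
Proof. by rewrite /pv insubT. Qed.

Lemma pvO n (p : 'S_n) (k : 'I_n) : pv p k = p k.
Proof. by rewrite (pvE p (ltn_ord k)); congr (val (p _)); apply: val_inj. Qed.

Lemma pv_inj n (p : 'S_n) i j : i < n -> j < n -> pv p i = pv p j -> i = j.
Proof.
move=> Hi Hj; rewrite (pvE p Hi) (pvE p Hj) => /val_inj /perm_inj.
by move/(congr1 val).
Qed.

Section UP.
Variables (n : nat) (u : seq letter).
Hypothesis Hup : upcycle n u.
Hypothesis n2 : 1 < n.

Local Notation N := (size u).
Local Notation x := (xx u).
Local Notation cf := (cfactor u n).

Lemma N_ge : n <= N. Proof. by case: Hup. Qed.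
Lemma N_pos : 0 < N. Proof. have := N_ge; lia. Qed.

Lemma size_cf t : size (cf t) = n.
Proof. by rewrite size_map size_iota. Qed.

Lemma nth_cf t j : j < n -> nth Diamond (cf t) j = x (t + j).
Proof. by move=> Hj; rewrite /cfactor (nth_map 0) ?size_iota // nth_iota. Qed.

Lemma cf_mod t : cf (t %% N) = cf t.
Proof. by apply: eq_map => j; rewrite modnDml. Qed.

Lemma x_mod p : x (p %% N) = x p.
Proof. by rewrite /xx modn_mod. Qed.

Lemma x_mulN p m : x (p + m * N) = x p.
Proof. by rewrite /xx addnC modnMDl. Qed.

Lemma covE t (p : 'S_n) :
  covers (cf t) p <-> forall i j a b, i < n -> j < n -> x (t + i) = Some a ->
     x (t + j) = Some b -> (a < b) = (pv p i < pv p j).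
Proof.
split.
  case=> _ H i j a b Hi Hj Ea Eb.
  rewrite (pvE p Hi) (pvE p Hj); apply: (H (Ordinal Hi) (Ordinal Hj)) => /=;
  by rewrite nth_cf.
move=> H; split; first exact: size_cf.
move=> i j a b; rewrite !nth_cf // -!pvO; exact: H.
Qed.

Lemma cov_eq s t (p : 'S_n) : covers (cf s) p -> covers (cf t) p -> s %% N = t %% N.
Proof.
case: Hup => _ _ _ _ /(_ p) [i0 [_ U]].
rewrite -(cf_mod s) -(cf_mod t) => Hs Ht.
rewrite -(U _ (conj (ltn_pmod _ N_pos) Hs)); exact: U (conj (ltn_pmod _ N_pos) Ht).
Qed.

Lemma cov_ex (p : 'S_n) : exists s, covers (cf s) p.
Proof. by case: Hup => _ _ _ _ /(_ p) [i0 [[_ H] _]]; exists i0. Qed.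

Lemma x_dist t i j a : i < n -> j < n -> x (t + i) = Some a -> x (t + j) = Some a -> i = j.
Proof.
move=> Hi Hj Ei Ej.
have U : uniq (int_letters (cf (t %% N))).
  by case: Hup => _ _ _ H _; apply: H; exact: ltn_pmod _ N_pos.
rewrite cf_mod in U.
  by apply: (uniq_pmap_nth (a := a) U); rewrite ?size_cf ?nth_cf.
Qed.


Lemma S1 t (p : 'S_n) : x t = Diamond ->
  (forall i j a b, i < n.-1 -> j < n.-1 -> x (t + 1 + i) = Some a ->
     x (t + 1 + j) = Some b -> (a < b) = (pv p i < pv p j)) ->
  covers (cf (t + 1)) p.
Proof.
move=> Ht Hp.
have [s Hs] := cov_ex p.
have HsE := (covE s p).1 Hs.
have Np := N_pos.
pose s' := s + N - 1.
pose b (j : nat) := 2 * pv p j.-1 + 2.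
pose P (j : 'I_n) := (0 < (j : nat)) &&
  (if x (s' + j) is Some e then (if x s' is Some c then e < c else false) else false).
pose M := \max_(j | P j) (pv p (j : nat).-1).+1.
pose a0 := 2 * M + 1.
pose a i := if i == 0 then a0 else b i.
have Hs'j j : 0 < j -> x (s' + j) = x (s + j.-1).
  move=> Hj; rewrite -[x (s + j.-1)](x_mulN _ 1) mul1n; congr xx; rewrite /s'; lia.
have mix j c e : 0 < j -> j < n -> x s' = Some c -> x (s' + j) = Some e ->
    ((c < e) = (a0 < b j)) /\ ((e < c) = (b j < a0)).
  move=> j0 jn Ec Ee.
  have nce : e != c.
    apply/eqP => ec; subst e.
    by have := x_dist (t := s') (i := 0) (j := j) (ltnW n2) jn; rewrite addn0 => /(_ _ Ec Ee); lia.
  case: (ltngtP e c) => ec.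
  - have PJ : P (Ordinal jn) by rewrite /P /= j0 Ee Ec.
    have := @leq_bigmax_cond _ P (fun j : 'I_n => (pv p (j : nat).-1).+1) _ PJ.
    rewrite -/M /= => HM.
    split; apply/idP/idP; rewrite /a0 /b; lia.
  - have HM : M <= pv p j.-1.
      apply/bigmax_leqP => j' /andP [j'0].
      case E' : (x (s' + j')) => [e'|] //; rewrite Ec => e'c.
      rewrite Hs'j // in E'; have Ee' := Ee; rewrite Hs'j // in Ee'.
      have j'n := ltn_ord j'.
      have := HsE j'.-1 j.-1 e' e (ltac:(lia)) (ltac:(lia)) E' Ee'.
      rewrite (ltn_trans e'c ec) => /esym H; lia.
    split; apply/idP/idP; rewrite /a0 /b; lia.
  - by rewrite ec eqxx in nce.
have ainj i j : i < n -> j < n -> a i = a j -> i = j.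
  move=> Hi Hj; rewrite /a /a0 /b.
  case: eqP => [->|i0]; case: eqP => [->|j0] //; try lia.
  move=> E; have : pv p i.-1 = pv p j.-1 by lia.
  move/pv_inj; lia.
have cons i j al be : i < n -> j < n -> nth Diamond (cf s') i = Some al ->
    nth Diamond (cf s') j = Some be -> (al < be) = (a i < a j).
  move=> Hi Hj; rewrite !nth_cf // /a.
  case: eqP => [->|i0]; case: eqP => [->|j0].
  - by rewrite addn0 => -> [->]; rewrite !ltnn.
  - rewrite addn0 => Ea Eb; have [] := mix j al be _ Hj Ea Eb => //; lia.
  - rewrite addn0 => Ea Eb; have [] := mix i be al _ Hi Eb Ea => //; lia.
  - rewrite !Hs'j; try lia.
    move=> Ea Eb; rewrite (HsE _ _ _ _ _ _ Ea Eb); try lia.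
    rewrite /b; apply/idP/idP; lia.
have [q [Hq Hqa]] := realize (size_cf s') ainj cons.
have Hqt : covers (cf t) q.
  apply/covE => i j al be Hi Hj Ea Eb.
  rewrite (pvE q Hi) (pvE q Hj) Hqa /a.
  have i0 : i != 0 by apply/eqP => i0; move: Ea; rewrite i0 addn0 Ht.
  have j0 : j != 0 by apply/eqP => j0; move: Eb; rewrite j0 addn0 Ht.
  rewrite (negbTE i0) (negbTE j0) /b.
  rewrite (Hp i.-1 j.-1 al be); try lia.
  - by rewrite /=; apply/idP/idP; lia.
  - by rewrite -Ea; congr xx; lia.
  - by rewrite -Eb; congr xx; lia.
have E := cov_eq Hq Hqt.
have E2 : (t + 1) %% N = s %% N.
  rewrite -modnDml -E modnDml -(modnDr s); congr modn; rewrite /s'; lia.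
by rewrite -cf_mod E2 cf_mod.
Qed.

Lemma modS_neq t : t %% N = (t + 1) %% N -> False.
Proof.
move=> /eqP; rewrite -{1}(addn0 t) eqn_modDl mod0n => /eqP.
have h : 1 < N by have := N_ge; lia.
by rewrite modn_small.
Qed.

Lemma lemA t : x t = Diamond -> x (t + n) = Diamond.
Proof.
move=> Ht; case Ec: (x (t + n)) => [c|] //; exfalso.
have nn : n.-1 < n by lia.
have Ec' : x (t + 1 + n.-1) = Some c by rewrite -Ec; congr xx; lia.
case: (boolP [exists i : 'I_(n.-1), x (t + 1 + i) != None]).
- case/existsP => i0; case Ee: (x (t + 1 + i0)) => [e|] // _.
  have i0n := ltn_ord i0.
  have Ee' : x (t + 1 + i0) = Some e by [].
  have nce : e != c.
    apply/eqP => ec; subst e.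
    have := x_dist (t := t + 1) (i := i0) (j := n.-1) _ _ Ee' Ec'; lia.
  pose a i := if i < n.-1 then (if x (t + 1 + i) is Some e' then 4 * e' + 4 else 4 * i + 1)
              else (if e < c then 4 * e + 2 else 4 * e + 6).
  have ainj i j : i < n -> j < n -> a i = a j -> i = j.
    move=> Hi Hj; rewrite /a.
    case: (ltnP i n.-1) => hi; case: (ltnP j n.-1) => hj; case: (e < c);
    case Ei: (x (t + 1 + i)) => [ei|]; case Ej: (x (t + 1 + j)) => [ej|];
    first [lia | move=> E; (have eij : ei = ej by lia); subst ej;
                 apply: (x_dist (t := t + 1) _ _ Ei Ej); lia].
  have [q Hq] := stdz ainj.
  have C : covers (cf (t + 1)) q.
    apply: S1 => // i j al be Hi Hj Ea Eb.
    rewrite (pvE q (ltn_trans Hi nn)) (pvE q (ltn_trans Hj nn)) Hq /a /=.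
    rewrite Hi Hj Ea Eb; apply/idP/idP; lia.
  have := (covE _ q).1 C i0 n.-1 e c _ _ Ee' Ec'.
  rewrite (pvE q (ltn_trans i0n nn)) (pvE q nn) Hq /a /= i0n ltnn Ee'.
  move: nce; case: (ltngtP e c) => //= ec _; lia.
- rewrite negb_exists => /forallP Hn.
  have HN i : i < n.-1 -> x (t + 1 + i) = None.
    by move=> Hi; have := Hn (Ordinal Hi); rewrite negbK => /eqP.
  have C0 : covers (cf t) (1%g : 'S_n).
    apply/covE => i j al be Hi Hj.
    case: i Hi => [|i] Hi; first by rewrite addn0 Ht.
    by rewrite (_ : t + i.+1 = t + 1 + i) ?HN //; lia.
  have C1 : covers (cf (t + 1)) (1%g : 'S_n).
    apply/covE => i j al be Hi Hj.
    case: (ltnP i n.-1) => hi; first by rewrite (HN i).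
    case: (ltnP j n.-1) => hj; first by rewrite (HN j).
    have -> : i = j by lia.
    by move=> -> [->]; rewrite !ltnn.
  exact: modS_neq (cov_eq C0 C1).
Qed.

End UP.


Section Count.
Variables (n : nat) (w : seq letter).
Hypothesis sw : size w = n.
Hypothesis uw : uniq (int_letters w).
Local Notation lt i := (nth Diamond w i).

Definition coversb (p : 'S_n) := [forall i : 'I_n, forall j : 'I_n,
  match lt i, lt j with Some a, Some b => (a < b) == (p i < p j) | _, _ => true end].

Lemma coversP p : reflect (covers w p) (coversb p).
Proof.
apply: (iffP idP).
  move=> H; split => // i j a b Ea Eb.
  by move: H => /forallP /(_ i) /forallP /(_ j); rewrite Ea Eb => /eqP.
case=> _ H; apply/forallP => i; apply/forallP => j.
by case Ea: (lt i) => [a|] //; case Eb: (lt j) => [b|] //; rewrite (H i j a b).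
Qed.

Lemma lt_inj i j a : i < n -> j < n -> lt i = Some a -> lt j = Some a -> i = j.
Proof. by move=> Hi Hj; apply: uniq_pmap_nth; rewrite ?sw. Qed.

Definition ST := {i : 'I_n | lt i == None}.
Definition phi (p : 'S_n) : {ffun ST -> 'I_n} := [ffun d => p (val d)].

Lemma agree_aux (p1 p2 : 'S_n) i0 : covers w p1 -> covers w p2 ->
  p1 i0 < p2 i0 ->
  (forall i : 'I_n, p1 i != p2 i -> p1 i0 <= p1 i /\ p1 i0 <= p2 i) ->
  (forall i : 'I_n, lt i = None -> p1 i = p2 i) -> False.
Proof.
move=> [_ C1] [_ C2] lt0 Hmin Hag.
pose j := (p2^-1)%g (p1 i0).
have p2j : p2 j = p1 i0 by rewrite /j permKV.
have ji0 : j != i0 by apply/eqP => E; move: lt0; rewrite -p2j E ltnn.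
have nj : p1 j != p2 j.
  apply/eqP => E; move: ji0; rewrite -(inj_eq (@perm_inj _ p1)) E p2j eqxx //.
have [l1 _] := Hmin j nj.
have lt1 : p1 i0 < p1 j.
  rewrite ltn_neqAle l1 andbT; apply/eqP => E.
  by move: ji0; rewrite (perm_inj (val_inj E)) eqxx.
have ni0 : p1 i0 != p2 i0 by rewrite neq_ltn lt0.
case Ea: (lt i0) => [a|]; last by move: ni0; rewrite Hag ?eqxx.
case Eb: (lt j) => [b|]; last by move: nj; rewrite Hag ?eqxx.
have h1 := C1 i0 j a b Ea Eb; rewrite lt1 in h1.
have h2 := C2 j i0 b a Eb Ea; rewrite p2j lt0 in h2.
lia.
Qed.

Lemma agree_eq (p1 p2 : 'S_n) : covers w p1 -> covers w p2 ->
  (forall i : 'I_n, lt i = None -> p1 i = p2 i) -> p1 = p2.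
Proof.
move=> C1 C2 Hag; apply/permP => i; apply/eqP; apply/negPn/negP => ne.
pose F k := minn (p1 k) (p2 k).
case: (@arg_minnP _ i (fun k => p1 k != p2 k) F ne) => i0 ne0 Hm.
case: (ltngtP (p1 i0) (p2 i0)) => h.
- apply: (agree_aux C1 C2 h) => // k nk; have := Hm k nk; rewrite /F; lia.
- apply: (agree_aux C2 C1 h) => [k nk|k Hk]; last by rewrite Hag.
  have := Hm k; rewrite eq_sym => /(_ nk); rewrite /F; lia.
- by rewrite (val_inj h) eqxx in ne0.
Qed.

Lemma card_ST : #|{: ST}| = #|[set i : 'I_n | lt i == None]|.
Proof. by rewrite card_sig; apply: eq_card => i; rewrite !inE. Qed.

Definition rk (i : 'I_n) := #|[set j : 'I_n |
  match lt j, lt i with Some b, Some a => b < a | _, _ => false end]|.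

Lemma rk_mono (i j : 'I_n) a b : lt i = Some a -> lt j = Some b -> a < b -> rk i < rk j.
Proof.
move=> Ea Eb ab; apply: proper_card; apply/properP; split.
  apply/subsetP => k; rewrite !inE Ea Eb; case: (lt k) => // c ca; exact: ltn_trans ca ab.
by exists i; rewrite !inE Ea ?Eb ?ltnn.
Qed.

Lemma rk_lt (i : 'I_n) a : lt i = Some a -> rk i < n - #|{: ST}|.
Proof.
move=> Ea.
have H1 : rk i < #|[set j : 'I_n | lt j != None]|.
  apply: proper_card; apply/properP; split.
    by apply/subsetP => k; rewrite !inE Ea; case: (lt k).
  by exists i; rewrite !inE Ea ?ltnn.
have H2 : #|[set j : 'I_n | lt j != None]| = n - #|{: ST}|.
  rewrite card_ST; have := cardsC [set i : 'I_n | lt i == None].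
  have -> : ~: [set i : 'I_n | lt i == None] = [set j : 'I_n | lt j != None].
    by apply/setP => k; rewrite !inE.
  rewrite card_ord; lia.
by rewrite -H2.
Qed.

Section Constr.
Variable f : {ffun ST -> 'I_n}.
Hypothesis finj : injective f.

Let S := [seq val y | y <- codom f].
Let Cn := [seq v <- iota 0 n | v \notin S].

Let Cn_sorted : sorted ltn Cn.
Proof. apply: sorted_filter; [exact: ltn_trans | exact: iota_ltn_sorted]. Qed.

Let Cn_uniq : uniq Cn.
Proof. by apply: filter_uniq; exact: iota_uniq. Qed.

Let size_Cn : size Cn = n - #|{: ST}|.
Proof.
have US : uniq S.
  rewrite map_inj_uniq; last exact: val_inj.
  by rewrite codomE map_inj_uniq ?enum_uniq.
have SS : size S = #|{: ST}| by rewrite size_map size_codom.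
have HS : count (mem S) (iota 0 n) = size S.
  rewrite -size_filter; apply: perm_size; apply: uniq_perm => //.
    exact: filter_uniq (iota_uniq _ _).
  move=> v; rewrite mem_filter mem_iota /=; apply/andP/idP => [[]//|vS].
  split => //; move: vS => /mapP [y _ ->]; rewrite add0n; exact: ltn_ord.
rewrite size_filter -SS -HS.
have := count_predC (mem S) (iota 0 n); rewrite size_iota.
have -> : count (fun v => v \notin S) (iota 0 n) = count (predC (mem S)) (iota 0 n).
  by apply: eq_count.
lia.
Qed.

Definition g0 (i : 'I_n) : nat :=
  if (insub i : option ST) is Some d then val (f d) else nth 0 Cn (rk i).

Let g_none (i : 'I_n) : lt i != None -> g0 i = nth 0 Cn (rk i).
Proof. by move=> H; rewrite /g0 insubF //; apply/negbTE. Qed.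

Let g_some (d : ST) : g0 (val d) = val (f d).
Proof. by rewrite /g0 valK. Qed.

Let g_someH (i : 'I_n) (H : lt i == None) : g0 i = val (f (Sub i H)).
Proof. by rewrite /g0 insubT. Qed.

Let rk_size (i : 'I_n) : lt i != None -> rk i < size Cn.
Proof. by rewrite size_Cn; case E: (lt i) => [a|] // _; exact: rk_lt E. Qed.

Let g_lt (i : 'I_n) : g0 i < n.
Proof.
case: (boolP (lt i == None)) => H.
  by rewrite (g_someH H) ltn_ord.
rewrite g_none //; have := mem_nth 0 (rk_size H); rewrite mem_filter mem_iota.
by case/andP => _ /andP [].
Qed.

Let g_inj (i j : 'I_n) : g0 i = g0 j -> i = j.
Proof.
case: (boolP (lt i == None)) => Hi; case: (boolP (lt j == None)) => Hj.
- rewrite (g_someH Hi) (g_someH Hj).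
  by move/val_inj/finj/(congr1 val).
- rewrite (g_someH Hi) g_none // => E.
  have := mem_nth 0 (rk_size Hj); rewrite -E mem_filter.
  by rewrite map_f ?codom_f.
- rewrite (g_someH Hj) g_none // => E.
  have := mem_nth 0 (rk_size Hi); rewrite E mem_filter.
  by rewrite map_f ?codom_f.
- rewrite !g_none // => E.
  have E2 : rk i = rk j by apply/eqP; rewrite -(nth_uniq 0 (rk_size Hi) (rk_size Hj) Cn_uniq) E.
  case Ea : (lt i) Hi => [a|] // _; case Eb : (lt j) Hj => [b|] // _.
  case: (ltngtP a b) => ab.
  + by have := rk_mono Ea Eb ab; rewrite E2 ltnn.
  + by have := rk_mono Eb Ea ab; rewrite E2 ltnn.
  + subst b; apply: val_inj; apply: (lt_inj _ _ Ea Eb); exact: ltn_ord.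
Qed.

Definition gp : 'S_n :=
  perm (fun i j (E : Ordinal (g_lt i) = Ordinal (g_lt j)) => g_inj (congr1 val E)).

Lemma gp_cov : covers w gp.
Proof.
split => // i j a b Ea Eb; rewrite !permE /=.
have Hi : lt i != None by rewrite Ea.
have Hj : lt j != None by rewrite Eb.
rewrite !g_none //.
have hom := sorted_ltn_nth ltn_trans 0 Cn_sorted.
case: (ltngtP a b) => ab.
- by rewrite hom ?inE ?rk_size // (rk_mono Ea Eb ab).
- by apply/esym/negbTE; rewrite -leqNgt ltnW // hom ?inE ?rk_size // (rk_mono Eb Ea ab).
- by subst b; rewrite (val_inj (lt_inj (ltn_ord i) (ltn_ord j) Ea Eb)) !ltnn.
Qed.

Lemma gp_phi : phi gp = f.
Proof.
by apply/ffunP => d; rewrite ffunE; apply: val_inj; rewrite permE /= g_some.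
Qed.

End Constr.

Lemma phi_inj : {in [set p | coversb p] &, injective phi}.
Proof.
move=> p1 p2; rewrite !inE => /coversP C1 /coversP C2 E.
apply: (agree_eq C1 C2) => i Hi.
have Hi' : lt i == None by rewrite Hi.
have := congr1 (fun F : {ffun ST -> 'I_n} => F (Sub i Hi' : ST)) E; rewrite !ffunE /=.
by [].
Qed.

Lemma card_cov : #|[set p | coversb p]| = n ^_ #|[set i : 'I_n | lt i == None]|.
Proof.
rewrite -(card_in_imset phi_inj) -card_ST -[n in n ^_ _]card_ord -card_inj_ffuns.
congr #|pred_of_set _|; apply/setP => F; rewrite inE.
apply/imsetP/idP => [[p _ ->]|Fi].
  apply/injectiveP => d1 d2; rewrite !ffunE => /perm_inj; exact: val_inj.
exists (gp (injectiveP _ Fi)); last by rewrite gp_phi.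
by rewrite inE; apply/coversP; exact: gp_cov.
Qed.

End Count.


Lemma prime_dvd_fact p m : prime p -> p %| m`! -> p <= m.
Proof.
move=> pp; elim: m => [|m IH].
  by rewrite fact0 dvdn1 => /eqP E; move: pp; rewrite E.
rewrite factS Euclid_dvdM // => /orP [H|H].
  by apply: dvdn_leq.
by apply: leq_trans (IH H) _.
Qed.

Section Fin.
Variables (n : nat) (u : seq letter).
Hypothesis Hup : upcycle n u.
Hypothesis n2 : 1 < n.

Local Notation N := (size u).
Local Notation x := (xx u).
Local Notation cf := (cfactor u n).

Lemma A_iter t m : x t = Diamond -> x (t + m * n) = Diamond.
Proof.
move=> Ht; elim: m => [|m IH]; first by rewrite mul0n addn0.
by rewrite mulSn (addnC n) addnA; apply: (lemA Hup n2).
Qed.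

Lemma A_conv t : x (t + n) = Diamond -> x t = Diamond.
Proof.
move=> H; have := A_iter (N.-1) H.
rewrite -addnA -mulSn prednK ?(N_pos Hup n2) // mulnC x_mulN //.
Qed.

Definition kk t := #|[set j : 'I_n | x (t + j) == None]|.

Lemma kkE t : kk t = \sum_(0 <= j < n) (x (t + j) == None).
Proof.
rewrite big_mkord /kk -sum1_card big_mkcond /=.
by apply: eq_bigr => j _; rewrite inE; case: (_ == _).
Qed.

Lemma kk_succ t : kk (t + 1) = kk t.
Proof.
have nP := prednK (ltnW n2).
have L : \sum_(0 <= j < n) (x (t + j) == None) =
   (x t == None) + \sum_(0 <= j < n.-1) (x (t + 1 + j) == None).
  rewrite -{1}nP big_nat_recl // addn0; congr (_ + _).
  by apply: eq_bigr => j _; rewrite addnS addn1 addSn.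
have R : \sum_(0 <= j < n) (x (t + 1 + j) == None) =
   \sum_(0 <= j < n.-1) (x (t + 1 + j) == None) + (x (t + n) == None).
  rewrite -{1}nP big_nat_recr // /=; congr (_ + (xx u _ == _)); lia.
rewrite !kkE L R addnC; congr (_ + _).
case Ht: (x t) => [a|]; case Hn: (x (t + n)) => [b|] //.
  by move: (A_conv Hn); rewrite Ht.
by move: (lemA Hup n2 Ht); rewrite Hn.
Qed.

Lemma kk_all t : kk t = kk 0.
Proof. by elim: t => // t IH; rewrite -addn1 kk_succ. Qed.

Lemma card_win t : #|[set p : 'S_n | coversb (cf t) p]| = n ^_ kk t.
Proof.
have U : uniq (int_letters (cf t)).
  rewrite -cf_mod; case: Hup => _ _ _ H _; apply: H; apply: ltn_pmod; exact: (N_pos Hup n2).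
rewrite (card_cov (size_cf n u t) U); congr (_ ^_ _).
by apply: eq_card => j; rewrite !inE nth_cf.
Qed.

Lemma sum_win : \sum_(t < N) #|[set p : 'S_n | coversb (cf t) p]| = n`!.
Proof.
rewrite -card_Sn.
under eq_bigr => t _ do rewrite -sum1_card big_mkcond /=.
rewrite exchange_big /= -sum1_card; apply: eq_big => [p|p _]; first by rewrite inE.
have [s Hs] := cov_ex Hup p.
have Np := N_pos Hup n2.
pose t0 : 'I_N := Ordinal (ltn_pmod s Np).
rewrite (bigD1 t0) /=; last by [].
rewrite inE (introT (coversP (size_cf n u t0) p)) /=; last by rewrite cf_mod.
rewrite big1 ?addn0 // => t nt; rewrite inE.
case: (coversP (size_cf n u t) p) => [C|]; last by [].
case/eqP: nt; apply: val_inj => /=.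
have := cov_eq Hup n2 C Hs; rewrite modn_small //.
Qed.

Lemma main_eq : N = (n - kk 0)`! /\ 0 < kk 0 <= n.
Proof.
have kn : kk 0 <= n by rewrite /kk; have := max_card [set j : 'I_n | x (0 + j) == None]; rewrite card_ord.
have Ek : N * n ^_ (kk 0) = n`!.
  rewrite -sum_win (eq_bigr (fun _ => n ^_ (kk 0))); last by move=> t _; rewrite card_win kk_all.
  by rewrite big_const_ord iter_addn_0 mulnC.
split; last first.
  rewrite kn andbT.
  case: Hup => _ /(nthP Diamond) [p0 Hp0 E0] _ _ _.
  rewrite -(kk_all p0); apply/card_gt0P; exists (Ordinal (ltnW n2)).
  by rewrite inE /= addn0 /xx modn_small // E0.
have := ffact_fact kn; rewrite -Ek => E.
have P : 0 < n ^_ kk 0 by rewrite ffact_gt0.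
by apply/eqP; rewrite -(eqn_pmul2l P) E mulnC.
Qed.

Lemma diamond_ex : exists p0, x p0 = Diamond.
Proof.
case: Hup => _ /(nthP Diamond) [p0 Hp0 E0] _ _ _.
by exists p0; rewrite /xx modn_small.
Qed.

End Fin.


Theorem corollary3 (n : nat) :
  prime n \/ n = 4 -> forall u : seq letter, ~ upcycle n u.
Proof.
move=> Hn u Hup.
have n2 : 1 < n by case: Hn => [/prime_gt1|->].
have [EN /andP [k1 kn]] := main_eq Hup n2.
have NG := N_ge Hup.
have [p0 Hp0] := diamond_ex Hup.
case: Hn => [pn|n4].
- have ndvd : ~~ (n %| size u).
    apply/negP; rewrite EN => /(prime_dvd_fact pn); lia.
  have cop : gcdn n (size u) = 1 by apply/eqP; rewrite -/(coprime _ _) prime_coprime.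
  case: (egcdnP (size u) (ltnW n2)) => km kN E _.
  rewrite cop in E.
  have step p : xx u p = Diamond -> xx u (p + 1) = Diamond.
    move=> Hp; have := A_iter Hup n2 km Hp.
    by rewrite E (addnC (kN * _)) addnA x_mulN.
  have all j : xx u (p0 + j) = Diamond.
    elim: j => [|j IH]; first by rewrite addn0.
    by rewrite -addn1 addnA; apply: step.
  have : kk n u p0 = n.
    rewrite /kk -[n in RHS]card_ord; apply: eq_card => j; by rewrite inE all eqxx.
  rewrite kk_all // => Ek; move: EN; rewrite Ek subnn fact0; lia.
- subst n.
  have k1' : kk 4 u 0 = 1.
    move: EN NG; case: (kk 4 u 0) k1 kn => [|[|[|[|[|k]]]]] //= _ _ -> //.
  have E6 : size u = 6 by rewrite EN k1'.
  have H2 : xx u (p0 + 2) = Diamond.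
    have := A_iter Hup n2 2 Hp0.
    by rewrite -[2 * 4]/(2 + 1 * 6) addnA -E6 x_mulN.
  have : 1 < kk 4 u p0.
    apply/card_gt1P; exists (Ordinal (isT : 0 < 4)), (Ordinal (isT : 2 < 4)).
    by rewrite !inE /= addn0 Hp0 H2.
  by rewrite kk_all // k1'.
Qed.
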